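(* Let $\|\cdot\|^*$ be an algebra norm on $\mathbb{R}^n$, let $J:\mathbb{R}\to\mathbb{R}$ be continuous, and let $C,\delta>0$. Then there exists a real polynomial $P$ such that, for every $\phi\in\mathbb{R}^n$ with $\|\phi\|^*\le C$, we have $\|P\circ\phi-J\circ\phi\|_\infty\le\delta$ and $\|P\circ\phi\|^*\le\rho(C,\delta,J)$.
   Context: An algebra norm is a norm $N$ on $\mathbb{R}^n$ (functions on $\{1,\dots,n\}$) with $N(fg)\le N(f)N(g)$ (pointwise product) and $N(\mathbf 1)=1$. $\|f\|_\infty=\max_x|f(x)|$; $P\circ\phi$, $J\circ\phi$ are pointwise compositions. For a real polynomial $P(x)=\sum_ka_kx^k$, $R_P(x)=\sum_k|a_k|x^k$. For continuous $J$ and $C,\delta>0$, $\rho(C,\delta,J)$ is twice the infimum of $R_P(C)$ over all real polynomials $P$ with $|P(x)-J(x)|\le\delta$ for all $x\in[-C,C]$. *)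

(* Defs.v *)
From HB Require Import structures.
From mathcomp Require Import all_boot all_order all_algebra.
From mathcomp Require Import all_classical all_reals all_analysis.
Set Implicit Arguments. Unset Strict Implicit. Unset Printing Implicit Defensive.
Import Order.TTheory GRing.Theory Num.Theory.
Import numFieldNormedType.Exports.
Local Open Scope classical_set_scope.
Local Open Scope ring_scope.

(* Functions on {1,...,n} are functions 'I_n -> R (pointwise operations). *)

Definition algebra_norm (R : realType) (n : nat) (N : ('I_n -> R) -> R) : Prop :=
  (forall f, 0 <= N f) /\
  (forall f, N f = 0 -> f = (fun _ => 0)) /\
  (forall (a : R) f, N (fun i => a * f i) = `|a| * N f) /\
  (forall f g, N (fun i => f i + g i) <= N f + N g) /\
  (forall f g, N (fun i => f i * g i) <= N f * N g) /\
  N (fun _ => 1) = 1.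

Definition sup_norm (R : realType) (n : nat) (f : 'I_n -> R) : R :=
  \big[Num.max/0]_(i < n) `|f i|.

Definition RP (R : realType) (P : {poly R}) (x : R) : R :=
  \sum_(k < size P) `|P`_k| * x ^+ k.

Definition rho (R : realType) (C delta : R) (J : R -> R) : R :=
  2 * inf [set r : R | exists P : {poly R},
             (forall x, -C <= x <= C -> `|P.[x] - J x| <= delta) /\ r = RP P C].

(* Main.v *)
Require Import Defs.
From HB Require Import structures.
From mathcomp Require Import all_boot all_order all_algebra.
From mathcomp Require Import all_classical all_reals all_analysis.
From mathcomp Require Import ring lra.
Import Order.TTheory GRing.Theory Num.Theory.
Import numFieldNormedType.Exports.
Local Open Scope classical_set_scope.
Local Open Scope ring_scope.
Section Bern.
Variable R : realType.
Definition bern (m k : nat) (t : R) : R := ('C(m, k))%:R * (t ^+ k * (1 - t) ^+ (m - k)).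

Lemma bern_ge0 m k t : 0 <= t <= 1 -> 0 <= bern m k t.
Proof.
move=> /andP[t0 t1]; rewrite /bern; apply: mulr_ge0 => //.
by apply: mulr_ge0; apply: exprn_ge0; lra.
Qed.

Lemma bern_sum0 m t : \sum_(k < m.+1) bern m k t = 1.
Proof.
have := exprDn (1 - t) t m; rewrite subrK expr1n => ->.
by apply: eq_bigr => k _; rewrite /bern mulr_natl mulrC.
Qed.

Lemma bern_shift m j t : (j.+1)%:R * bern m.+1 j.+1 t = m.+1%:R * t * bern m j t.
Proof.
rewrite /bern subSS mulrA -natrM -mul_bin_diag natrM /= exprS; ring.
Qed.

Lemma bern_sum1 m t : \sum_(k < m.+1) k%:R * bern m k t = m%:R * t.
Proof.
case: m => [|m]; first by rewrite big_ord1 !mul0r.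
rewrite big_ord_recl /= mul0r add0r.
under eq_bigr => i _ do rewrite /bump /= add1n bern_shift.
by rewrite -mulr_sumr bern_sum0 mulr1.
Qed.

Lemma bern_sum2 m t : \sum_(k < m.+1) (k%:R * (k%:R - 1)) * bern m k t = m%:R * (m%:R - 1) * t ^+ 2.
Proof.
case: m => [|m]; first by rewrite big_ord1 !mul0r.
rewrite big_ord_recl /= mul0r mul0r add0r.
rewrite (eq_bigr (fun i : 'I_m.+1 => (m.+1%:R * t) * (i%:R * bern m i t))); last first.
  move=> i _; rewrite /bump /= add1n.
  have := bern_shift m i t; rewrite -natr1 addrK => h.
  have -> : (i%:R + 1) * i%:R * bern m.+1 i.+1 t = i%:R * ((i%:R + 1) * bern m.+1 i.+1 t) by ring.
  by rewrite h; ring.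
by rewrite -mulr_sumr bern_sum1 -natr1 addrK; ring.
Qed.

Lemma bern_var m t : (0 < m)%N ->
  \sum_(k < m.+1) (k%:R / m%:R - t) ^+ 2 * bern m k t = (t - t ^+ 2) / m%:R.
Proof.
move=> m0; have mn0 : (m%:R : R) != 0 by rewrite pnatr_eq0 -lt0n.
rewrite (eq_bigr (fun k : 'I_m.+1 => (m%:R^-1)^+2 * ((k%:R * (k%:R - 1)) * bern m k t)
   + ((m%:R^-1)^+2 - 2 * t * m%:R^-1) * (k%:R * bern m k t) + t^+2 * bern m k t)); last first.
  by move=> k _; ring.
rewrite !big_split /= -!mulr_sumr bern_sum2 bern_sum1 bern_sum0.
by field.
Qed.
End Bern.
Arguments bern {R}.
Arguments bern_ge0 {R}.
Arguments bern_sum0 {R}.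
Arguments bern_var {R}.
Lemma unif_cont01 (R : realType) (g : R -> R) (e : R) : continuous g -> 0 < e ->
  exists2 eta : R, 0 < eta & forall s t, 0 <= t <= 1 -> `|s - t| < eta -> `|g s - g t| < e.
Proof.
move=> gc e0.
have := @segment_compact R 0 1; rewrite compact_near_coveringP => /(_ R (0^'+)
  (fun eta t => forall s, `|s - t| < eta -> `|g s - g t| < e) _).
case.
- move=> x _.
  have e20 : 0 < e / 2 by lra.
  have := gc x; move=> /cvgrPdist_lt /(_ _ e20) /nbhs_ballP [d /= d0 Hd].
  have d20 : 0 < d / 2 by lra.
  near=> x' i => s /= hs.
  have hx : `|x - x'| < d / 2 by near: x'; apply/nbhs_ballP; exists (d/2).
  have hi : i < d / 2 by near: i; exact: nbhs_right_lt.
  have h1 := Hd x'; have h2 := Hd s; rewrite /ball /= in h1 h2.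
  have T1 := ler_distD x' x s.
  have T2 := ler_distD (g x) (g s) (g x').
  rewrite (distrC x' s) in T1; rewrite (distrC (g s) (g x)) in T2.
  have h1' : `|g x - g x'| < e / 2 by apply: h1; lra.
  have h2' : `|g x - g s| < e / 2 by apply: h2; lra.
  lra.
- move=> r r0 Hr; exists (r / 2); first by move: r0 => /=; lra.
  move=> s t t01; apply: (Hr (r / 2)).
  + by rewrite /ball /= sub0r normrN gtr0_norm; move: r0 => /=; lra.
  + by move: r0 => /=; lra.
  + by rewrite /= in_itv /=.
Unshelve. all: by end_near.
Qed.
Lemma bern_approx (R : realType) (g : R -> R) (eps : R) : continuous g -> 0 < eps ->
  exists Q : {poly R}, forall t, 0 <= t <= 1 -> `|Q.[t] - g t| <= eps.
Proof.
move=> gc eps0.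
have [c _ Hc] : exists2 c, c \in `[(0:R), 1] & forall t, t \in `[(0:R), 1] -> `|g t| <= `|g c|.
  apply: EVT_max => //; apply: continuous_subspaceT => x.
  exact: (continuous_comp (gc x) (@norm_continuous _ R _)).
set M := `|g c|.
have HM : forall t, 0 <= t <= 1 -> `|g t| <= M by move=> t ht; apply: Hc; rewrite in_itv.
have M0 : 0 <= M by rewrite /M normr_ge0.
have e20 : 0 < eps / 2 by lra.
have [eta eta0 Heta] := @unif_cont01 R g _ gc e20.
set K := 2 * M / eta ^+ 2.
have K0 : 0 <= K by rewrite /K; apply: divr_ge0; [lra| exact: exprn_ge0 (ltW eta0)].
have pw : forall s t, 0 <= s <= 1 -> 0 <= t <= 1 -> `|g s - g t| <= eps / 2 + K * (s - t) ^+ 2.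
  move=> s t hs ht.
  have Kp : 0 <= K * (s - t) ^+ 2 by apply: mulr_ge0 => //; exact: sqr_ge0.
  have [lt|ge] := ltP `|s - t| eta.
    by have := Heta s t ht lt; lra.
  have e2 : eta ^+ 2 <= (s - t) ^+ 2.
    rewrite -(@real_normK _ (s - t)) ?num_real //; apply: lerXn2r => //; rewrite qualifE /= ?normr_ge0 ?ltW //.
  have : 2 * M <= K * (s - t) ^+ 2.
    have -> : 2 * M = K * eta ^+ 2 by rewrite /K -mulrA mulVf ?mulr1 // expf_neq0 // gt_eqF.
    by rewrite ler_wpM2l.
  have := ler_normB (g s) (g t); have := HM s hs; have := HM t ht; lra.
pose m := (Num.bound (K / (eps / 2))).+1.
have m0 : (0 < m)%N by [].
have hm : K / m%:R <= eps / 2.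
  have hb := @archi_boundP R (K / (eps / 2)) (divr_ge0 K0 (ltW e20)).
  rewrite ltr_pdivrMr // in hb.
  rewrite ler_pdivrMr ?ltr0n //.
  apply: (le_trans (ltW hb)); rewrite mulrC ler_wpM2l ?ler_nat ?(ltW e20) //.
pose Q : {poly R} := \sum_(k < m.+1) (g (k%:R / m%:R) * ('C(m, k))%:R) *: ('X^k * (1 - 'X) ^+ (m - k)).
exists Q => t ht.
have QE : Q.[t] = \sum_(k < m.+1) g (k%:R / m%:R) * bern m k t.
  rewrite /Q horner_sum; apply: eq_bigr => k _.
  by rewrite !hornerE /bern; ring.
rewrite QE.
have -> : g t = \sum_(k < m.+1) g t * bern m k t by rewrite -mulr_sumr bern_sum0 mulr1.
rewrite -sumrB.
apply: le_trans (ler_norm_sum _ _ _) _.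
apply: (@le_trans _ _ (\sum_(k < m.+1) (eps / 2 + K * (k%:R / m%:R - t) ^+ 2) * bern m k t)).
  apply: ler_sum => k _.
  have b0 := bern_ge0 m k t ht.
  rewrite -mulrBl normrM (ger0_norm b0) ler_wpM2r //.
  apply: pw => //.
  have mR0 : (0 : R) < m%:R by rewrite ltr0n.
  apply/andP; split; first by apply: divr_ge0.
  by rewrite ler_pdivrMr // mul1r ler_nat -ltnS ltn_ord.
rewrite (eq_bigr (fun k : 'I_m.+1 => eps / 2 * bern m k t + K * ((k%:R / m%:R - t) ^+ 2 * bern m k t))); last by move=> k _; ring.
rewrite big_split /= -!mulr_sumr bern_sum0 (bern_var m t m0).
have -> : K * ((t - t ^+ 2) / m%:R) = (t - t ^+ 2) * (K / m%:R) by ring.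
have u0 : 0 <= K / m%:R by apply: divr_ge0.
move: ht => /andP[t0 t1].
nra.
Qed.
Lemma weier (R : realType) (J : R -> R) (C eps : R) : continuous J -> 0 < C -> 0 < eps ->
  exists P : {poly R}, forall x, -C <= x <= C -> `|P.[x] - J x| <= eps.
Proof.
move=> Jc C0 e0.
pose g := fun t : R => J (- C + 2 * C * t).
have gc : continuous g.
  move=> t; apply: continuous_comp; last exact: Jc.
  apply: continuousD; first exact: cst_continuous.
  apply: continuousM; [exact: cst_continuous | exact: cvg_id].
have [Q HQ] := @bern_approx R g _ gc e0.
exists (Q \Po ((2 * C)^-1 *: ('X + C%:P))) => x hx.
rewrite horner_comp !hornerE.
have C2 : 2 * C != 0 by rewrite gt_eqF // mulr_gt0.
have -> : J x = g ((2 * C)^-1 * (x + C)).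
  rewrite /g; congr J; rewrite mulrA mulfV // mul1r; ring.
apply: HQ; move: hx => /andP[h1 h2].
apply/andP; split.
  by apply: mulr_ge0; [rewrite invr_ge0 ltW // mulr_gt0 | lra].
by rewrite mulrC ler_pdivrMr ?mulr_gt0 //; lra.
Qed.
Section Main.
Variables (R : realType) (n : nat) (N : ('I_n -> R) -> R).
Hypothesis HN : algebra_norm N.

Lemma N0 : N (fun _ => 0) = 0.
Proof.
case: HN => _ [_ [Nh _]].
have -> : (fun _ : 'I_n => (0:R)) = (fun i => 0 * (fun _ => (0:R)) i) by apply: funext => i; rewrite mul0r.
by rewrite Nh normr0 mul0r.
Qed.

Lemma Ncoord phi i : `|phi i| <= N phi.
Proof.
case: HN => Nge [Nz [Nh [Nt [Nm N1]]]].
pose e := fun j : 'I_n => if j == i then (1:R) else 0.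
have e0 : 0 < N e.
  rewrite lt0r Nge andbT; apply/eqP => /Nz /(congr1 (fun f => f i)).
  by rewrite /e eqxx => /eqP; rewrite oner_eq0.
have h : (fun j => e j * phi j) = (fun j => phi i * e j).
  by apply: funext => j; rewrite /e; case: eqP => [->|_]; rewrite ?mulr1 ?mul1r ?mulr0 ?mul0r.
have := Nm e phi; rewrite h Nh mulrC => H.
by rewrite -(ler_pM2l e0).
Qed.

Lemma Nsum (I : Type) (r : seq I) (F : I -> 'I_n -> R) :
  N (fun i => \sum_(k <- r) F k i) <= \sum_(k <- r) N (F k).
Proof.
case: HN => Nge [Nz [Nh [Nt [Nm N1]]]].
elim: r => [|a r IH].
  under [X in N X]funext => i do rewrite big_nil.
  by rewrite big_nil N0.
under [X in N X]funext => i do rewrite big_cons.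
rewrite big_cons; apply: le_trans (Nt _ _) _.
by rewrite lerD2l.
Qed.

Lemma Npow phi k : N (fun i => phi i ^+ k) <= N phi ^+ k.
Proof.
case: HN => Nge [Nz [Nh [Nt [Nm N1]]]].
elim: k => [|k IH].
  by under [X in N X]funext => i do rewrite expr0; rewrite N1 expr0.
under [X in N X]funext => i do rewrite exprS.
rewrite exprS; apply: le_trans (Nm _ _) _.
by rewrite ler_wpM2l.
Qed.

Lemma Npoly (P : {poly R}) phi : N (fun i => P.[phi i]) <= RP P (N phi).
Proof.
case: HN => Nge [Nz [Nh [Nt [Nm N1]]]].
under [X in N X]funext => i do rewrite horner_coef.
apply: le_trans (Nsum _ (index_enum 'I_(size P)) (fun (k : 'I_(size P)) i => P`_k * phi i ^+ k)) _.
rewrite /RP; apply: ler_sum => k _.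
rewrite Nh ler_wpM2l //; exact: Npow.
Qed.
End Main.
Lemma RP_ge0 (R : realType) (P : {poly R}) x : 0 <= x -> 0 <= RP P x.
Proof. by move=> x0; apply: sumr_ge0 => k _; apply: mulr_ge0 => //; apply: exprn_ge0. Qed.

Lemma RP_mono (R : realType) (P : {poly R}) x y : 0 <= x -> x <= y -> RP P x <= RP P y.
Proof.
move=> x0 xy; apply: ler_sum => k _; rewrite ler_wpM2l //.
by apply: lerXn2r => //; rewrite qualifE /= ?(le_trans x0 xy).
Qed.

Lemma horner_RP (R : realType) (P : {poly R}) x C : `|x| <= C -> `|P.[x]| <= RP P C.
Proof.
move=> hx; rewrite horner_coef; apply: le_trans (ler_norm_sum _ _ _) _.
apply: ler_sum => k _; rewrite normrM normrX ler_wpM2l //.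
by apply: lerXn2r => //; rewrite qualifE /= ?(le_trans _ hx).
Qed.

Lemma RP0 (R : realType) C : RP (0 : {poly R}) C = 0.
Proof. by rewrite /RP size_poly0 big_ord0. Qed.

Lemma good_poly (R : realType) (J : R -> R) (C delta : R) :
  continuous J -> 0 < C -> 0 < delta ->
  exists P : {poly R}, (forall x, -C <= x <= C -> `|P.[x] - J x| <= delta) /\ RP P C <= rho C delta J.
Proof.
move=> Jc C0 d0.
set S := [set r : R | exists P : {poly R},
             (forall x, -C <= x <= C -> `|P.[x] - J x| <= delta) /\ r = RP P C].
have [P0 HP0] := @weier R J C delta Jc C0 d0.
have Sne : S !=set0 by exists (RP P0 C); exists P0.
have Slb : lbound S 0 by move=> r [P [_ ->]]; apply: RP_ge0; exact: ltW.
have Shi : has_inf S by split => //; exists 0.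
have inf0 : 0 <= inf S by apply: lb_le_inf.
have [ipos|inp] := ltP 0 (inf S).
  have [r [P [HP ->]] Hr] := inf_adherent ipos Shi.
  exists P; split => //; rewrite /rho; apply: ltW; move: Hr; rewrite /S; lra.
exists 0; split; last by rewrite RP0 /rho; apply: mulr_ge0.
move=> x hx; rewrite horner0 sub0r normrN.
apply/ler_addgt0Pr => e e0.
have [r [P [HP ->]] Hr] := inf_adherent e0 Shi.
have h1 := HP x hx.
have h2 : `|P.[x]| <= RP P C by apply: horner_RP; rewrite ler_norml.
have h3 := ler_distD (P.[x]) (J x) 0.
rewrite !subr0 distrC in h3.
move: Hr; rewrite -/S; lra.
Qed.
Theorem lemma4p3 (R : realType) (n : nat) (N : ('I_n -> R) -> R)
    (J : R -> R) (C delta : R) :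
  algebra_norm N -> continuous J -> 0 < C -> 0 < delta ->
  exists P : {poly R}, forall phi : 'I_n -> R, N phi <= C ->
    sup_norm (fun i => P.[phi i] - J (phi i)) <= delta /\
    N (fun i => P.[phi i]) <= rho C delta J.
Proof.
move=> HN Jc C0 d0.
have [P [HP HR]] := @good_poly R J C delta Jc C0 d0.
exists P => phi hphi; split.
  rewrite /sup_norm; apply: bigmax_le; first exact: ltW.
  move=> i _ /=; apply: HP; rewrite -ler_norml.
  exact: le_trans (@Ncoord _ _ _ HN phi i) hphi.
apply: le_trans (@Npoly _ _ _ HN P phi) _; apply: le_trans HR.
apply: RP_mono => //.
by case: HN => Nge _.
Qed.
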